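(* Let $G$ be a Klee-graph. For every $v\in V(G)$ there exists a $v$-join of $G$.
   Context: For a cubic graph $G$ and $v\in V(G)$, a $v$-join of $G$ is a spanning subgraph in which $v$ has degree $3$ and every other vertex has degree $1$. For a cubic graph $G$ and $v\in V(G)$ with neighbours $x_1,x_2,x_3$, $G^v$ denotes the cubic graph obtained by replacing $v$ by a triangle: delete $v$, add new vertices $v_1,v_2,v_3$, the edges $v_1v_2,v_2v_3,v_3v_1$, and the edges $v_ix_i$ for $i=1,2,3$. A graph is a Klee-graph if it is $K_4$, or it equals $H^w$ for some Klee-graph $H$ and some $w\in V(H)$. *)

(* Defs.v *)
From mathcomp Require Import all_boot.
Set Implicit Arguments. Unset Strict Implicit. Unset Printing Implicit Defensive.

Section Graphs.
Variable T : finType.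
Implicit Types (e : rel T).

Definition simple_graph e := symmetric e /\ irreflexive e.

Definition deg e (x : T) : nat := #|[set y | e x y]|.

Definition cubic e := simple_graph e /\ forall x, deg e x = 3.

Definition vjoin e (v : T) (S : rel T) :=
  [/\ symmetric S, subrel S e, deg S v = 3 & forall x, x != v -> deg S x = 1].

(* G^w : replace w by a triangle.  Old vertices are [inl a] with a != w;
   the new triangle vertices are [inr x], one for each neighbour x of w
   (the vertex "w_x" joined to x). *)
Definition tri_valid e (w : T) (u : T + T) : bool :=
  match u with inl a => a != w | inr x => e w x end.

Definition tri_type e w := {u : T + T | tri_valid e w u}.

Definition tri_rel0 e (u1 u2 : T + T) : bool :=
  match u1, u2 with
  | inl a, inl b => e a b
  | inl a, inr x => a == x
  | inr x, inl a => a == x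
  | inr x, inr y => x != y
  end.

Definition tri_rel e w : rel (tri_type e w) :=
  fun u1 u2 => tri_rel0 e (val u1) (val u2).
End Graphs.

Definition giso (T1 T2 : finType) (e1 : rel T1) (e2 : rel T2) :=
  exists f : T1 -> T2, bijective f /\ forall x y, e2 (f x) (f y) = e1 x y.

Definition K4rel : rel 'I_4 := fun i j => i != j.

Inductive klee : forall T : finType, rel T -> Prop :=
| klee_K4 (T : finType) (e : rel T) : giso e K4rel -> klee e
| klee_step (H : finType) (eH : rel H) (w : H) (T : finType) (e : rel T) :
    klee eH -> giso e (@tri_rel H eH w) -> klee e.

(* Main.v *)
Require Import Defs.
From mathcomp Require Import all_boot.
Set Implicit Arguments. Unset Strict Implicit. Unset Printing Implicit Defensive.

Definition pmatch (T : finType) (e M : rel T) :=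
  [/\ symmetric M, subrel M e & forall x, deg M x = 1].

Definition Inv (T : finType) (e : rel T) :=
  [/\ symmetric e, irreflexive e, (forall x, deg e x = 3),
      (forall v, exists S, vjoin e v S) &
      (forall a b, e a b -> exists M, pmatch e M /\ M a b)].

Lemma deg_iso (T1 T2 : finType) (R1 : rel T1) (R2 : rel T2) (f : T1 -> T2) :
  bijective f -> (forall x y, R2 (f x) (f y) = R1 x y) ->
  forall x, deg R1 x = deg R2 (f x).
Proof.
move=> bf Hf x; rewrite /deg -(card_imset _ (bij_inj bf)).
apply: eq_card => z; apply/imsetP/idP.
- by case=> y; rewrite inE => Hy ->; rewrite inE Hf.
- case: bf => g fg gf; rewrite inE => Hz; exists (g z); last by rewrite gf.
  by rewrite inE -Hf gf.
Qed.

Lemma deg_map (T1 T2 : finType) (R : rel T1) (u : T1) (f : T1 -> T2) (A : {set T2}) :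
  {in [set z | R u z] &, injective f} ->
  (forall t, t \in A -> exists z, R u z /\ f z = t) ->
  (forall z, R u z -> f z \in A) -> deg R u = #|A|.
Proof.
move=> inj h1 h2; rewrite /deg -(card_in_imset inj); apply: eq_card => t.
apply/imsetP/idP.
- by case=> z; rewrite inE => /h2 ? ->.
- by move/h1 => [z [Rz <-]]; exists z; rewrite ?inE.
Qed.

Lemma deg1E (T : finType) (R : rel T) x : deg R x = 1 -> exists y, forall z, R x z = (z == y).
Proof.
move=> /eqP /cards1P [y hy]; exists y => z.
by move/setP: hy => /(_ z); rewrite !inE.
Qed.

Lemma Inv_giso (T1 T2 : finType) (e1 : rel T1) (e2 : rel T2) :
  giso e1 e2 -> Inv e2 -> Inv e1.
Proof.
case=> f [bf Hf] [sym2 irr2 cub2 join2 pm2].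
have inj := bij_inj bf.
split.
- by move=> x y; rewrite -!Hf sym2.
- by move=> x; rewrite -Hf irr2.
- by move=> x; rewrite (deg_iso bf Hf) cub2.
- move=> v; have [S [sS subS dv d1]] := join2 (f v).
  exists (fun a b => S (f a) (f b)); split.
  + by move=> a b; rewrite sS.
  + by move=> a b /subS; rewrite Hf.
  + by rewrite (deg_iso (R1 := fun a b => S (f a) (f b)) bf (fun _ _ => erefl)).
  + move=> x xv; rewrite (deg_iso (R1 := fun a b => S (f a) (f b)) bf (fun _ _ => erefl)).
    by apply: d1; apply: contra xv => /eqP /inj ->.
- move=> a b; rewrite -Hf => /pm2 [M [[sM subM dM] Mab]].
  exists (fun a b => M (f a) (f b)); split=> //; split.
  + by move=> c d; rewrite sM.
  + by move=> c d /subM; rewrite Hf.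
  + by move=> x; rewrite (deg_iso (R1 := fun a b => M (f a) (f b)) bf (fun _ _ => erefl)).
Qed.

Lemma Inv_K4 : Inv K4rel.
Proof.
split.
- by move=> x y; rewrite /K4rel eq_sym.
- by move=> x; rewrite /K4rel eqxx.
- move=> x; rewrite /deg /K4rel; transitivity #|[set~ x]|; last by rewrite cardsC1 card_ord.
  by apply: eq_card => y; rewrite !inE eq_sym.
- move=> v; exists (fun a b => (a != b) && ((a == v) || (b == v))); split.
  + by move=> a b; rewrite eq_sym orbC.
  + by move=> a b /andP [].
  + rewrite /deg; transitivity #|[set~ v]|; last by rewrite cardsC1 card_ord.
    by apply: eq_card => y; rewrite !inE eqxx andbT eq_sym.
  + move=> x /negbTE xv; rewrite /deg; transitivity #|[set v]|; last by rewrite cards1.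
    apply: eq_card => y.
    rewrite !inE xv /=; case: (y =P v) => [->|]; by rewrite ?xv ?andbF.
- move=> a b ab.
  pose P := [set a; b].
  exists (fun c d => (c != d) && ((c \in P) == (d \in P))); split; last first.
    by move: ab; rewrite /K4rel => ->; rewrite /P !inE !eqxx ?orbT.
  split.
  + by move=> c d; rewrite eq_sym [(d \in P) == _]eq_sym.
  + by move=> c d /andP [].
  + move=> c.
    have cP2 : #|P| = 2 by rewrite /P cards2; move: ab; rewrite /K4rel => ->.
    clearbody P.
    have ->: deg (fun c d => (c != d) && ((c \in P) == (d \in P))) c =
             #|(if c \in P then P else ~: P) :\ c|.
      rewrite /deg; apply: eq_card => d; rewrite !inE eq_sym.
      by case: (c \in P); rewrite ?inE; case: (d \in P).
    have := cardsC P; rewrite cP2 card_ord => cC.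
    case cPb: (c \in P).
    * by move: cP2; rewrite (cardsD1 c) cPb => -[].
    * have : c \in ~: P by rewrite inE cPb.
      move=> cC'; move: cC; rewrite (cardsD1 c (~: P)) cC' => -[]; by rewrite add0n.
Qed.

Definition tl (H : finType) (eH : rel H) (w b : H) (hb : b != w) : tri_type eH w :=
  exist _ (inl b) hb.
Definition tr (H : finType) (eH : rel H) (w x : H) (hx : eH w x) : tri_type eH w :=
  exist _ (inr x) hx.

Arguments tr {H} eH {w x} hx.

Definition phiw (H : finType) (eH : rel H) (w : H) (u : tri_type eH w) : H :=
  match val u with inl b => b | inr _ => w end.
Definition pr (H : finType) (eH : rel H) (w : H) (u : tri_type eH w) : H :=
  match val u with inl b => b | inr z => z end.

Definition tlift (H : finType) (eH : rel H) (w : H) (Q S : rel H) (y : H) :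
  rel (tri_type eH w) := fun u1 u2 =>
  match val u1, val u2 with
  | inl b, inl c => S b c
  | inl b, inr x => (b == x) && (x == y)
  | inr x, inl b => (b == x) && (x == y)
  | inr x, inr z => Q x z
  end.

Lemma lift_sym (H : finType) (eH : rel H) (w : H) (Q S : rel H) (y : H) :
  symmetric S -> symmetric Q -> symmetric (@tlift H eH w Q S y).
Proof. by move=> sS sQ [[b|x] hb] [[c|z] hc]; rewrite /tlift /=; [rewrite sS| | |rewrite sQ]. Qed.

Lemma lift_sub (H : finType) (eH : rel H) (w : H) (Q S : rel H) (y : H) :
  subrel S eH -> (forall x z, Q x z -> x != z) ->
  subrel (@tlift H eH w Q S y) (@tri_rel H eH w).
Proof.
move=> subS hQ [[b|x] hb] [[c|z] hc]; rewrite /tlift /tri_rel /=.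
- exact: subS.
- by case/andP.
- by case/andP.
- exact: hQ.
Qed.

Lemma lift_deg_inl (H : finType) (eH : rel H) (w : H) (Q S : rel H) (y : H) b
  (hb : b != w) :
  symmetric S -> subrel S eH -> (forall z, S w z = (z == y)) ->
  deg (@tlift H eH w Q S y) (tl eH hb) = deg S b.
Proof.
move=> sS subS Sw; rewrite [RHS]/deg.
apply: (deg_map (f := @phiw H eH w)).
- move=> [[c|x] hc] [[d|z] hd]; rewrite !inE /tlift /phiw /=.
  + by move=> _ _ cd; apply: val_inj; rewrite /= cd.
  + move=> _ _ cw; exfalso; have := hc; by rewrite /= cw eqxx.
  + move=> _ _ dw; exfalso; have := hd; by rewrite /= -dw eqxx.
  + move=> /andP [/eqP bx _] /andP [/eqP bz _] _; apply: val_inj.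
    by rewrite /= -bx -bz.
- move=> t; rewrite inE => Sbt; case: (eqVneq t w) => [tw | htw].
  + have Swb : S w b by rewrite sS -tw.
    have hb' : eH w b := subS _ _ Swb.
    exists (tr eH hb'); rewrite /tlift /phiw /= eqxx tw; split=> //.
    by rewrite -Sw.
  + by exists (tl eH htw).
- move=> [[c|x] hc]; rewrite /tlift /phiw /= inE //.
  by move=> /andP [/eqP <- xy]; rewrite sS Sw.
Qed.

Lemma lift_deg_inr (H : finType) (eH : rel H) (w : H) (Q S : rel H) (y : H) x
  (hx : eH w x) :
  irreflexive eH -> (forall x z, Q x z -> x != z) ->
  deg (@tlift H eH w Q S y) (tr eH hx) =
  #|[set t | ((t == x) && (x == y)) || (eH w t && Q x t)]|.
Proof.
move=> irr hQ.
have xw : x != w by apply: contraTneq hx => ->; rewrite irr.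
apply: (deg_map (f := @pr H eH w)).
- move=> [[c|z] hc] [[d|z'] hd]; rewrite !inE /tlift /pr /=.
  + move=> /andP [/eqP cx _] /andP [/eqP dx _] _; apply: val_inj; by rewrite /= cx dx.
  + move=> /andP [/eqP cx _] /hQ xz' cz'; exfalso; move: xz'; by rewrite -cz' cx eqxx.
  + move=> /hQ xz /andP [/eqP dx _] zd; exfalso; move: xz; by rewrite zd dx eqxx.
  + by move=> _ _ zz; apply: val_inj; rewrite /= zz.
- move=> t; rewrite inE => /orP [/andP [/eqP tx xy] | /andP [wt Qxt]].
  + exists (tl eH xw); rewrite /tlift /pr /= eqxx xy tx; split=> //.
  + by exists (tr eH wt).
- move=> [[c|z] hc]; rewrite /tlift /pr /= inE.
  + by move=> /andP [/eqP -> ->]; rewrite eqxx.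
  + by move=> Qxz; rewrite Qxz andbT; apply/orP; right.
Qed.

Lemma third (T : finType) (N : {set T}) x y :
  #|N| = 3 -> x \in N -> y \in N -> x != y -> #|N :\ x :\ y| = 1.
Proof.
move=> N3 xN yN xy.
have yNx : y \in N :\ x by rewrite !inE eq_sym xy yN.
move: N3; rewrite (cardsD1 x) xN (cardsD1 y (N :\ x)) yNx.
by case.
Qed.

Definition Qn (H : finType) (y : H) : rel H := fun x z => [&& x != z, x != y & z != y].
Definition Qs (H : finType) (y : H) : rel H := fun x z => (x != z) && ((x == y) || (z == y)).

Lemma Inv_tri (H : finType) (eH : rel H) (w : H) : Inv eH -> Inv (@tri_rel H eH w).
Proof.
case=> sym irr cub join pm.
have Nw : #|[set t | eH w t]| = 3 := cub w.
have pmw : forall a b, eH a b -> exists M y,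
    [/\ pmatch eH M, M a b & forall z, M w z = (z == y)].
  move=> a b /pm [M [[sM subM dM] Mab]]; have [y hy] := deg1E (dM w).
  by exists M, y; split.
have Qnsym (y : H) : symmetric (Qn y).
  by move=> x z; rewrite /Qn [x == z]eq_sym [(x != y) && _]andbC.
have Qnirr (y x z : H) : Qn y x z -> x != z by case/and3P.
have inr1 : forall (S : rel H) (y x : H) (hx : eH w x), eH w y ->
    deg (@tlift H eH w (Qn y) S y) (exist _ (inr x) hx) = 1.
  move=> S y x hx wy.
  rewrite (@lift_deg_inr H eH w (Qn y) S y x hx irr (Qnirr y)).
  case: (eqVneq x y) => [<-|xy].
  + rewrite -(cards1 x); apply: eq_card => t; rewrite !inE /Qn eqxx andbT /=.
    by rewrite !andbF orbF.
  + rewrite -(third Nw (x:=x) (y:=y)) ?inE //.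
    apply: eq_card => t; rewrite !inE /Qn (negbTE xy) andbF /= [x == t]eq_sym.
    by case: (t == x); case: (t == y); case: (eH w t).
have pmlift : forall (M : rel H) (y : H), pmatch eH M -> (forall z, M w z = (z == y)) ->
    pmatch (@tri_rel H eH w) (@tlift H eH w (Qn y) M y).
  move=> M y [sM subM dM] hy.
  have wy : eH w y by apply: subM; rewrite hy.
  split.
  - by apply: lift_sym; [exact: sM | exact: Qnsym].
  - by apply: lift_sub; [exact: subM | exact: (Qnirr y)].
  - move=> [[b|x] h].
    + exact: (etrans (@lift_deg_inl H eH w (Qn y) M y b h sM subM hy) (dM b)).
    + exact: inr1.
split.
- move=> [[b|x] hb] [[c|z] hc]; rewrite /tri_rel /=; [exact: sym | by [] | by [] | by rewrite eq_sym].
- by move=> [[b|x] hb]; rewrite /tri_rel /= ?irr ?eqxx.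
- move=> [[a|x] h].
  + rewrite -(cub a) [RHS]/deg; apply: (deg_map (f := @phiw H eH w)).
    * move=> [[c|x] hc] [[d|z] hd]; rewrite !inE /tri_rel /phiw /=.
      -- by move=> _ _ cd; apply: val_inj; rewrite /= cd.
      -- move=> _ _ cw; exfalso; have := hc; by rewrite /= cw eqxx.
      -- move=> _ _ dw; exfalso; have := hd; by rewrite /= -dw eqxx.
      -- move=> /eqP ax /eqP az _; apply: val_inj; by rewrite /= -ax -az.
    * move=> t; rewrite inE => eat; case: (eqVneq t w) => [tw | htw].
      -- have wa : eH w a by rewrite sym -tw.
         exists (tr eH wa); rewrite /tri_rel /phiw /= eqxx tw; split=> //.
      -- by exists (tl eH htw).
    * move=> [[c|z] hc]; rewrite /tri_rel /phiw /= inE //.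
      by move=> /eqP ->; rewrite sym.
  + rewrite -Nw; apply: (deg_map (f := @pr H eH w)).
    * move=> [[c|z] hc] [[d|z'] hd]; rewrite !inE /tri_rel /pr /=.
      -- move=> /eqP cx /eqP dx _; apply: val_inj; by rewrite /= cx dx.
      -- move=> /eqP cx xz' cz'; exfalso; move: xz'; by rewrite -cz' cx eqxx.
      -- move=> xz /eqP dx zd; exfalso; move: xz; by rewrite zd dx eqxx.
      -- by move=> _ _ zz; apply: val_inj; rewrite /= zz.
    * have xw : x != w by apply: contraTneq h => ->; rewrite /= irr.
      move=> t; rewrite inE => wt; case: (eqVneq t x) => [tx | htx].
      -- exists (tl eH xw); rewrite /tri_rel /pr /= eqxx tx; split=> //.
      -- exists (tr eH wt); rewrite /tri_rel /pr /= eq_sym htx; split=> //.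
    * move=> [[c|z] hc]; rewrite /tri_rel /pr /= inE //.
      by move=> /eqP ->.
- move=> [[a|x] h].
  + have [S [sS subS dSa dS1]] := join a.
    have wa : w != a by rewrite eq_sym.
    have [y hy] := deg1E (dS1 w wa).
    have wy : eH w y by apply: subS; rewrite hy.
    exists (@tlift H eH w (Qn y) S y); split.
    * by apply: lift_sym; [exact: sS | exact: Qnsym].
    * by apply: lift_sub; [exact: subS | exact: (Qnirr y)].
    * exact: (etrans (@lift_deg_inl H eH w (Qn y) S y a h sS subS hy) dSa).
    * move=> [[b|z] hb] ne.
      -- apply: (etrans (@lift_deg_inl H eH w (Qn y) S y b hb sS subS hy)).
         apply: dS1; apply: contra ne => /eqP ba; apply/eqP; apply: val_inj.
         by rewrite /= ba.
      -- exact: inr1.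
  + have [M [y [[sM subM dM] Mwx hy]]] := pmw w x h.
    move: (hy x); rewrite Mwx => /esym /eqP xy; subst y.
    have Qssym : symmetric (Qs x) by move=> c d; rewrite /Qs eq_sym orbC.
    have Qsirr : forall c d, Qs x c d -> c != d by move=> c d /andP [].
    exists (@tlift H eH w (Qs x) M x); split.
    * by apply: lift_sym; [exact: sM | exact: Qssym].
    * by apply: lift_sub; [exact: subM | exact: Qsirr].
    * rewrite (@lift_deg_inr H eH w (Qs x) M x x h irr Qsirr) -Nw.
      apply: eq_card => t; rewrite !inE /Qs eqxx andbT /=.
      case: (eqVneq t x) => [->|tx]; first by move: (h); rewrite /= => ->.
      by case: (eH w t).
    * move=> [[b|z] hb] ne.
      -- exact: (etrans (@lift_deg_inl H eH w (Qs x) M x b hb sM subM hy) (dM b)).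
      -- have zx : z != x.
           by apply: contra ne => /eqP zx; apply/eqP; apply: val_inj; rewrite /= zx.
         rewrite (@lift_deg_inr H eH w (Qs x) M x z hb irr Qsirr) -(cards1 x).
         apply: eq_card => t; rewrite !inE /Qs (negbTE zx) andbF /=.
         case: (eqVneq t x) => [->|tx].
           move: (h); rewrite /= => ->.
           by rewrite zx.
         by rewrite !andbF.
- move=> [[a|x] ha] [[b|z] hb]; rewrite /tri_rel /= => hab.
  + have [M [y [pmM Mab hy]]] := pmw a b hab.
    exists (@tlift H eH w (Qn y) M y); split; first exact: pmlift.
    by rewrite /tlift /=.
  + have [M [y [pmM Mwz hy]]] := pmw w z hb.
    exists (@tlift H eH w (Qn y) M y); split; first exact: pmlift.
    by rewrite /tlift /= hab -hy.
  + have [M [y [pmM Mwx hy]]] := pmw w x ha.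
    exists (@tlift H eH w (Qn y) M y); split; first exact: pmlift.
    by rewrite /tlift /= hab -hy.
  + have := third Nw (x:=x) (y:=z); rewrite !inE => /(_ ha hb hab) /eqP /cards1P [t ht].
    have : t \in [set t | eH w t] :\ x :\ z by rewrite ht inE.
    rewrite !inE => /and3P [tz tx wt].
    have [M [y [pmM Mwt hy]]] := pmw w t wt.
    exists (@tlift H eH w (Qn y) M y); split; first exact: pmlift.
    move: (hy t); rewrite Mwt => /esym /eqP ty; subst y.
    by rewrite /tlift /= /Qn hab eq_sym tx eq_sym tz.
Qed.

Lemma klee_Inv (T : finType) (e : rel T) : klee e -> Inv e.
Proof.
elim=> {T e} [T e iso | H eH w T e _ IH iso].
- exact: Inv_giso iso Inv_K4.
- exact: Inv_giso iso (Inv_tri w IH).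
Qed.

Theorem mainTheorem6 (T : finType) (e : rel T) :
  klee e -> forall v : T, exists S : rel T, vjoin e v S.
Proof. by move=> /klee_Inv [_ _ _ hj _]. Qed.
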